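(* (a) For every threshold function $f$ it holds that $NN(f)=2$. (b) If $n$ is odd then $BNN(MAJ_n)=2$, and if $n$ is even then $BNN(MAJ_n)\le \frac n2+2$. (c) $BNN\left(TH_n^{\lfloor n/3\rfloor}\right)=2^{\Omega(n)}$.
   Context: For a Boolean function $f:\{0,1\}^n\to\{0,1\}$, points $a$ with $f(a)=1$ are positive and those with $f(a)=0$ negative. A nearest neighbor representation of $f$ is a pair of disjoint sets $(P,N)$ of points of $\mathbb R^n$ such that for every $a\in\{0,1\}^n$: if $a$ is positive, there is $b\in P$ with $d(a,b)<d(a,c)$ for all $c\in N$; if $a$ is negative, there is $b\in N$ with $d(a,b)<d(a,c)$ for all $c\in P$ ($d$ = Euclidean distance). Its size is $|P\cup N|$. $NN(f)$ is the minimum size of a nearest neighbor representation of $f$; $BNN(f)$ is the minimum size of one with $P\cup N\subseteq\{0,1\}^n$. A Boolean function $f$ is a threshold function if there are $w_1,\dots,w_n,t\in\mathbb R$ with $f(x)=1$ iff $w_1x_1+\dots+w_nx_n\ge t$ for all $x\in\{0,1\}^n$. $TH_n^t$ denotes the $n$-variable function with $TH_n^t(x)=1$ iff $x_1+\dots+x_n\ge t$, and $MAJ_n=TH_n^{n/2}$. In (c), $n\to\infty$. *)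

(* Defs.v *)
From HB Require Import structures.
From mathcomp Require Import all_boot all_order all_algebra.
From mathcomp Require Import reals exp.
Set Implicit Arguments. Unset Strict Implicit. Unset Printing Implicit Defensive.
Import Order.TTheory GRing.Theory Num.Theory.
Local Open Scope ring_scope.

Definition cube (n : nat) := {ffun 'I_n -> bool}.

Definition boolfun (n : nat) := cube n -> bool.

Definition point (R : realType) (n : nat) := 'rV[R]_n.

Definition embed (R : realType) (n : nat) (a : cube n) : point R n :=
  \row_i (a i)%:R.

Definition dist (R : realType) (n : nat) (x y : point R n) : R :=
  Num.sqrt (\sum_i (x 0 i - y 0 i) ^+ 2).

Definition is_nn_rep (R : realType) (n : nat) (f : boolfun n)
    (P N : seq (point R n)) : Prop :=
  [/\ uniq P && uniq N, P != [::], N != [::],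
      (forall x, x \in P -> x \notin N) &
      forall a : cube n,
        if f a then
          exists2 b, b \in P & forall c, c \in N -> dist (embed R a) b < dist (embed R a) c
        else
          exists2 b, b \in N & forall c, c \in P -> dist (embed R a) b < dist (embed R a) c ].

(* Size |P u N| (= |P| + |N| since P, N are disjoint). *)
Definition rep_size (R : realType) (n : nat) (P N : seq (point R n)) : nat :=
  size P + size N.

Definition is_bnn_rep (R : realType) (n : nat) (f : boolfun n)
    (P N : seq (point R n)) : Prop :=
  is_nn_rep f P N /\
  forall x, x \in P ++ N -> exists a : cube n, x = embed R a.

Definition NN_eq (R : realType) (n : nat) (f : boolfun n) (k : nat) : Prop :=
  (exists P N : seq (point R n), is_nn_rep f P N /\ rep_size P N = k) /\
  forall P N : seq (point R n), is_nn_rep f P N -> (k <= rep_size P N)%N.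

Definition BNN_eq (R : realType) (n : nat) (f : boolfun n) (k : nat) : Prop :=
  (exists P N : seq (point R n), is_bnn_rep f P N /\ rep_size P N = k) /\
  forall P N : seq (point R n), is_bnn_rep f P N -> (k <= rep_size P N)%N.

Definition BNN_le (R : realType) (n : nat) (f : boolfun n) (k : nat) : Prop :=
  exists P N : seq (point R n), is_bnn_rep f P N /\ (rep_size P N <= k)%N.

Definition is_threshold (R : realType) (n : nat) (f : boolfun n) : Prop :=
  exists (w : 'I_n -> R) (t : R),
    forall x : cube n, f x = (t <= \sum_i w i * (x i)%:R).

Definition TH (n t : nat) : boolfun n := fun x => (t <= \sum_i (x i : nat))%N.
Definition MAJ (n : nat) : boolfun n := fun x => (n <= 2 * \sum_i (x i : nat))%N.

(* Main.v *)
Require Import Defs.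
From HB Require Import structures.
From mathcomp Require Import all_boot all_order all_algebra.
From mathcomp Require Import reals exp.
From mathcomp Require Import zify ring lra.
Import Order.TTheory GRing.Theory Num.Theory.
Set Implicit Arguments. Unset Strict Implicit. Unset Printing Implicit Defensive.
Local Open Scope ring_scope.


Definition ham n (a b : cube n) : nat := (\sum_i (a i != b i : nat))%N.
Definition wt n (a : cube n) : nat := (\sum_i (a i : nat))%N.

Lemma ham_tri n (a b c : cube n) : (ham a c <= ham a b + ham b c)%N.
Proof.
rewrite /ham -big_split /=; apply: leq_sum => i _.
by case: (a i); case: (b i); case: (c i).
Qed.

Lemma ham_meet n (a p : cube n) :
  ham a p = (ham a [ffun i => a i && p i] + ham [ffun i => a i && p i] p)%N.
Proof.
rewrite /ham -big_split /=; apply: eq_bigr => i _; rewrite ffunE.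
by case: (a i); case: (p i).
Qed.

Lemma ham_join n (y q : cube n) :
  ham y q = (ham y [ffun i => y i || q i] + ham [ffun i => y i || q i] q)%N.
Proof.
rewrite /ham -big_split /=; apply: eq_bigr => i _; rewrite ffunE.
by case: (y i); case: (q i).
Qed.

Lemma ham_sub n (a p : cube n) : (forall i, a i -> p i) -> (ham a p + wt a)%N = wt p.
Proof.
move=> h; rewrite /ham /wt -big_split /=; apply: eq_bigr => i _.
by move: (h i); case: (a i); case: (p i) => // ->.
Qed.

Lemma ham_le n (a q : cube n) : (forall i, q i -> a i) -> (ham a q <= wt a)%N.
Proof.
move=> h; rewrite /ham /wt; apply: leq_sum => i _.
by move: (h i); case: (a i); case: (q i) => // ->.
Qed.

Lemma wt_lt n (y a : cube n) i : (forall j, y j -> a j) -> a i -> ~~ y i -> (wt y < wt a)%N.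
Proof.
move=> h ai yi; rewrite /wt (bigD1 i) //= [X in (_ < X)%N](bigD1 i) //= ai (negbTE yi).
rewrite add0n add1n ltnS; apply: leq_sum => j _.
by move: (h j); case: (y j); case: (a j) => // ->.
Qed.

Lemma wt_del n (a : cube n) i : a i -> wt a = (wt [ffun j => a j && (j != i)]).+1.
Proof.
move=> ai; rewrite /wt (bigD1 i) //= [X in _ = X.+1](bigD1 i) //= ai ffunE eqxx /=.
have -> : (\sum_(j < n | j != i) [ffun j => a j && (j != i)] j = \sum_(j < n | j != i) a j)%N.
  by apply: eq_bigr => j hj; rewrite ffunE hj andbT.
by rewrite andbF add1n.
Qed.

Lemma wt_le n (y a : cube n) : (forall j, y j -> a j) -> (wt y <= wt a)%N.
Proof.
move=> h; rewrite /wt; apply: leq_sum => j _.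
by move: (h j); case: (y j); case: (a j) => // ->.
Qed.

Lemma key n k (inP inN : pred (cube n)) :
  (0 < k)%N ->
  (forall a, (k <= wt a)%N -> exists2 p, inP p & forall q, inN q -> (ham a p < ham a q)%N) ->
  (forall a, (wt a < k)%N -> exists2 q, inN q & forall p, inP p -> (ham a q < ham a p)%N) ->
  forall a, wt a = k -> exists p, [/\ inP p, (forall i, a i -> p i) & (wt p < 2 * k)%N].
Proof.
move=> k0 hpos hneg a wa.
have [p Pp hp] := hpos a (eq_leq (esym wa)).
have sub : forall i, a i -> p i.
  move=> i ai; apply/negPn/negP => npi.
  set y := [ffun i => a i && p i].
  have wy : (wt y < k)%N.
    rewrite -wa; apply: (wt_lt (i:=i)) => [j|//|].
      by rewrite ffunE => /andP[].
    by rewrite ffunE ai (negbTE npi).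
  have [q Nq hq] := hneg y wy.
  have := hp q Nq; have := ham_tri a y q; have := hq p Pp; rewrite (ham_meet a p) -/y.
  lia.
have [i ai] : exists i, a i.
  case: (boolP [exists i, a i]) => [/existsP // | /existsPn h].
  move: wa; rewrite /wt big1 => [hk|j _]; first by move: k0; rewrite -hk.
  by rewrite (negbTE (h j)).
set y := [ffun j => a j && (j != i)].
have wy : wt a = (wt y).+1 by exact: wt_del.
have [q Nq hq] := hneg y ltac:(lia).
have qy : forall j, q j -> y j.
  move=> j qj; apply/negPn/negP => nyj.
  set z := [ffun j => y j || q j].
  have wz : (wt y < wt z)%N.
    apply: (wt_lt (i:=j)); last exact: nyj.
    - by move=> l yl; rewrite ffunE yl.
    - by rewrite ffunE qj orbT.
  have [p' Pp' hp'] := hpos z ltac:(lia).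
  have := hp' q Nq; have := ham_tri y z p'; have := hq p' Pp'; rewrite (ham_join y q) -/z.
  lia.
exists p; split => //.
have h1 := hp q Nq.
have h2 := ham_sub sub.
have h3 : (ham a q <= wt a)%N.
  apply: ham_le => j /qy; rewrite ffunE => /andP[] //.
lia.
Qed.


Lemma card_cover (T : finType) (U : eqType) (s : seq U) (F : U -> {set T}) c :
  forall W : {set T},
  (forall x, x \in W -> exists2 S, S \in s & x \in F S) ->
  (forall S, S \in s -> (#|F S| <= c)%N) -> (#|W| <= size s * c)%N.
Proof.
elim: s => [|S s IH] W hW hF.
  rewrite mul0n leqn0 cards_eq0; apply/eqP/setP => x; rewrite inE.
  by apply/negbTE/negP => /hW [].
have h1 : (#|W| <= #|F S :|: (W :\: F S)|)%N.
  apply: subset_leq_card; apply/subsetP => x xW; rewrite !inE xW andbT.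
  by case: (x \in F S).
have h2 := (leq_card_setU (F S) (W :\: F S)).1.
have h3 : (#|W :\: F S| <= size s * c)%N.
  apply: IH; last by move=> S' hS'; apply: hF; rewrite inE hS' orbT.
  move=> x; rewrite !inE => /andP[nx xW].
  have [S' ] := hW x xW; rewrite inE => /orP[/eqP -> | hS' hx]; first by rewrite (negbTE nx).
  by exists S'.
have h4 := hF S (mem_head _ _).
rewrite /= mulSn; lia.
Qed.

Lemma ffact_cmp k : forall m n, (3 * m <= 2 * n)%N -> (3 ^ k * m ^_ k <= 2 ^ k * n ^_ k)%N.
Proof.
elim: k => [|k IH] m n h; first by [].
rewrite !ffactnS !expnS.
have := leq_mul h (IH m.-1 n.-1 ltac:(lia)).
have -> : (3 * m * (3 ^ k * m.-1 ^_ k) = 3 * 3 ^ k * (m * m.-1 ^_ k))%N by ring.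
have -> : (2 * n * (2 ^ k * n.-1 ^_ k) = 2 * 2 ^ k * (n * n.-1 ^_ k))%N by ring.
by [].
Qed.

Lemma pow_cmp k : (2 ^ k * 2 ^ (k %/ 2) <= 3 ^ k)%N.
Proof.
have e : k = (k %/ 2 * 2 + k %% 2)%N by rewrite -divn_eq.
have hr : (k %% 2 <= 1)%N by lia.
move: e hr; move: (k %/ 2)%N (k %% 2)%N => j r -> hr.
rewrite !expnD -mulnAC.
apply: leq_mul; last by case: r hr => [|[|]].
rewrite -expnD (_ : (j * 2 + j = j * 3)%N); last by lia.
rewrite (mulnC j 3) (mulnC j 2) !expnM.
case: j => [|j]; first by [].
by rewrite leq_exp2r.
Qed.


Lemma sqdist_embed (R : realType) n (a b : cube n) :
  \sum_i ((embed R a) 0 i - (embed R b) 0 i) ^+ 2 = (ham a b)%:R.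
Proof.
rewrite /ham natr_sum; apply: eq_bigr => i _; rewrite !mxE.
by case: (a i); case: (b i); rewrite /= ?subrr ?expr0n ?subr0 ?sub0r ?sqrrN ?expr1n.
Qed.

Lemma dist_ltE (R : realType) n (x y z : point R n) :
  (dist x y < dist x z) = (\sum_i (x 0 i - y 0 i) ^+ 2 < \sum_i (x 0 i - z 0 i) ^+ 2).
Proof.
rewrite /dist.
have A0 : 0 <= \sum_i (x 0 i - y 0 i) ^+ 2 by apply: sumr_ge0 => i _; exact: sqr_ge0.
case: (ltrP 0 (\sum_i (x 0 i - z 0 i) ^+ 2)) => hB; first by rewrite ltr_sqrt.
have -> : Num.sqrt (\sum_i (x 0 i - z 0 i) ^+ 2) = 0 by apply/eqP; rewrite sqrtr_eq0.
rewrite ltNge sqrtr_ge0 /=; apply/esym/negbTE; rewrite -leNgt; exact: le_trans hB A0.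
Qed.

Lemma dist_embed_lt (R : realType) n (a b c : cube n) :
  (dist (embed R a) (embed R b) < dist (embed R a) (embed R c)) = (ham a b < ham a c)%N.
Proof. by rewrite dist_ltE !sqdist_embed ltr_nat. Qed.

Lemma wt_card n (a : cube n) : wt a = #|[set i | a i]|.
Proof.
rewrite -sum1dep_card /wt [RHS]big_mkcond /=; apply: eq_bigr => i _; by case: (a i).
Qed.

Lemma partc (R : realType) : exists c : R, 0 < c /\
     exists n0 : nat, forall n : nat, (n0 <= n)%N ->
       forall P N : seq (point R n), is_bnn_rep (@TH n (n %/ 3)) P N ->
         (2 : R) `^ (c * n%:R) <= (rep_size P N)%:R.
Proof.
exists (12%:R)^-1; split; first by rewrite invr_gt0 ltr0n.
exists 12%N => n hn P N [[_ _ _ _ hrep] getc].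
set k := (n %/ 3)%N in hrep.
have k0 : (0 < k)%N by rewrite /k; lia.
pose inP := fun p : cube n => embed R p \in P.
pose inN := fun q : cube n => embed R q \in N.
have hpos : forall a, (k <= wt a)%N -> exists2 p, inP p & forall q, inN q -> (ham a p < ham a q)%N.
  move=> a ha; have := hrep a; rewrite /TH -/(wt a) ha /= => -[b bP hb].
  have [p ep] := getc b ltac:(by rewrite mem_cat bP).
  exists p; first by rewrite /inP -ep.
  move=> q qN; rewrite -(dist_embed_lt R) -ep; exact: hb.
have hneg : forall a, (wt a < k)%N -> exists2 q, inN q & forall p, inP p -> (ham a q < ham a p)%N.
  move=> a ha; have := hrep a; rewrite /TH -/(wt a) leqNgt ha /= => -[b bN hb].
  have [q eq] := getc b ltac:(by rewrite mem_cat bN orbT).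
  exists q; first by rewrite /inN -eq.
  move=> p pP; rewrite -(dist_embed_lt R) -eq; exact: hb.
pose Pc := map (fun x : point R n => [set i | x 0 i == 1]) P.
pose F := fun S : {set 'I_n} => if (#|S| < 2 * k)%N then
   [set A : {set 'I_n} | (A \subset S) && (#|A| == k)] else set0.
have hc : (#|[set A : {set 'I_n} | #|A| == k]| <= size Pc * 'C((2 * k).-1, k))%N.
  have := (@card_cover _ _ Pc F ('C((2 * k).-1, k)) [set A : {set 'I_n} | #|A| == k]); apply.
  - move=> A; rewrite inE => /eqP hA.
    pose a : cube n := [ffun i => i \in A].
    have wa : wt a = k.
      by rewrite wt_card -hA (_ : [set i | a i] = A) //; apply/setP => i; rewrite inE ffunE.
    have [p [Pp sp wp]] := key k0 hpos hneg wa.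
    exists [set i | embed R p 0 i == 1]; first by apply: (map_f (fun x : point R n => [set i | x 0 i == 1])).
    have -> : [set i | embed R p 0 i == 1] = [set i | p i].
      by apply/setP => i; rewrite !inE mxE; case: (p i); rewrite ?eqxx // eq_sym oner_eq0.
    rewrite /F -wt_card wp inE hA eqxx andbT.
    apply/subsetP => i iA; rewrite inE; apply: sp; by rewrite ffunE.
  - move=> S _; rewrite /F; case: ifP => h; last by rewrite cards0.
    rewrite cards_draws; apply: leq_bin2l; lia.
rewrite card_draws card_ord size_map in hc.
have h1 := @ffact_cmp k (2 * k).-1 n ltac:(rewrite /k; lia).
rewrite -!bin_ffact in h1.
have h2 : (3 ^ k * 'C((2*k).-1, k) <= 2 ^ k * 'C(n, k))%N.
  by rewrite -(leq_pmul2r (fact_gt0 k)) -!mulnA.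
have hb : (0 < 'C((2*k).-1, k))%N by rewrite bin_gt0; lia.
have h3 : (3 ^ k <= 2 ^ k * size P)%N.
  rewrite -(leq_pmul2r hb) -mulnA; apply: leq_trans h2 _; rewrite leq_mul2l hc orbT //.
have h4 := pow_cmp k.
have t2 : (0 < 2 ^ k)%N by rewrite expn_gt0.
have h5 : (2 ^ (k %/ 2) <= size P)%N.
  by rewrite -(leq_pmul2l t2); apply: leq_trans h4 h3.
rewrite /rep_size.
apply: (@le_trans _ _ ((2 ^ (k %/ 2))%:R)); last by rewrite ler_nat; lia.
rewrite natrX -powR_mulrn ?ler0n //; apply: ler_powR; first by rewrite ler1n.
rewrite mulrC ler_pdivrMr ?ltr0n // -natrM ler_nat /k; lia.
Qed.


Lemma nn_size_ge2 (R : realType) n (f : boolfun n) (P N : seq (point R n)) :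
  is_nn_rep f P N -> (2 <= rep_size P N)%N.
Proof.
case=> _ P0 N0 _ _; rewrite /rep_size.
case: P P0 => // ? ? _; case: N N0 => // ? ? _ /=; lia.
Qed.

Lemma nn2 (R : realType) n (f : boolfun n) (v : point R n) (s : R) (i0 : 'I_n) :
  v 0 i0 != 0 ->
  (forall x : cube n, if f x then s < \sum_i (embed R x) 0 i * v 0 i
                      else \sum_i (embed R x) 0 i * v 0 i < s) ->
  NN_eq R f 2.
Proof.
move=> hv hf.
set nv := \sum_i v 0 i ^+ 2.
have nv0 : 0 < nv.
  rewrite /nv (bigD1 i0) //=.
  have h1 : 0 < v 0 i0 ^+ 2 by rewrite lt0r sqrf_eq0 hv sqr_ge0.
  have h2 : 0 <= \sum_(i < n | i != i0) v 0 i ^+ 2 by apply: sumr_ge0 => i _; exact: sqr_ge0.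
  lra.
set mu := s / nv.
set p := mu *: v.
split; last by move=> P N h; exact: nn_size_ge2 h.
exists [:: p + v], [:: p - v]; split => //.
have key : forall x : point R n, \sum_i (x 0 i - (p + v) 0 i) ^+ 2 =
    \sum_i (x 0 i - (p - v) 0 i) ^+ 2 - 4 * (\sum_i x 0 i * v 0 i) + 4 * s.
  move=> x.
  transitivity (\sum_i ((x 0 i - (p - v) 0 i) ^+ 2 - 4 * (x 0 i * v 0 i) + 4 * (mu * v 0 i ^+ 2))).
    by apply: eq_bigr => i _; rewrite !mxE; ring.
  rewrite big_split big_split /= sumrN -!mulr_sumr -/nv /mu divfK //.
  by rewrite gt_eqF.
split => //.
- move=> x; rewrite !inE => /eqP ->; apply/eqP => /matrixP /(_ 0 i0); rewrite !mxE => h.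
  have : v 0 i0 = 0 by lra.
  by move/eqP; rewrite (negbTE hv).
- move=> a; have := hf a; case: (f a) => h; [exists (p + v) | exists (p - v)];
    rewrite ?inE //; move=> c; rewrite inE => /eqP ->; rewrite dist_ltE key; lra.
Qed.

Lemma parta (R : realType) n (f : boolfun n) : (0 < n)%N -> is_threshold R f -> NN_eq R f 2.
Proof.
move=> n0 [w [t hw]].
pose dot := fun x : cube n => \sum_i w i * (x i)%:R.
case: (boolP [exists i, w i != 0]) => [/existsP [i0 hi0] | /existsPn hw0].
- pose M := \big[Num.max/(t - 1)]_(x : cube n | dot x < t) dot x.
  have Mt : M < t.
    rewrite /M; elim/big_ind: _ => //; first lra.
    by move=> a b ha hb; rewrite gt_max ha hb.
  have Mx : forall x, dot x < t -> dot x <= M.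
    by move=> x hx; rewrite /M (bigD1 x) //= le_max lexx.
  have ed : forall x : cube n, \sum_i (embed R x) 0 i * (\row_i w i) 0 i = dot x.
    by move=> x; apply: eq_bigr => i _; rewrite !mxE mulrC.
  apply: (@nn2 R n f (\row_i w i) ((M + t) / 2) i0); first by rewrite mxE.
  move=> x; rewrite ed hw -/(dot x); case: ifP => h.
    lra.
  move/negbT: h; rewrite -ltNge => h.
  have := Mx x h; lra.
- have n0' : (0 < n)%N := n0.
  pose i0 : 'I_n := Ordinal n0'.
  have hf : forall x, f x = (t <= 0).
    move=> x; rewrite hw big1 // => i _.
    by move/negPn/eqP: (hw0 i) ->; rewrite mul0r.
  have ed : forall x : cube n,
      \sum_i (embed R x) 0 i * (\row_i ((i == i0)%:R : R)) 0 i = (x i0)%:R.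
    move=> x; rewrite (bigD1 i0) //= big1 => [|i hi]; rewrite !mxE ?eqxx ?(negbTE hi).
      by rewrite mulr1 addr0.
    by rewrite mulr0.
  apply: (@nn2 R n f (\row_i ((i == i0)%:R : R)) (if t <= 0 then -1 else 2) i0).
    by rewrite mxE eqxx oner_eq0.
  move=> x; rewrite ed hf; case: (t <= 0); case: (x i0) => /=; lra.
Qed.


Lemma embed_inj (R : realType) n : injective (@embed R n).
Proof.
move=> a b /matrixP h; apply/ffunP => i; have := h 0 i; rewrite !mxE => /eqP.
by rewrite eqr_nat; case: (a i); case: (b i).
Qed.

Lemma bnn_of_ham (R : realType) n (f : boolfun n) (P N : seq (cube n)) :
  uniq P -> uniq N -> P != [::] -> N != [::] -> (forall x, x \in P -> x \notin N) ->
  (forall a, if f a then exists2 b, b \in P & forall c, c \in N -> (ham a b < ham a c)%N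
             else exists2 b, b \in N & forall c, c \in P -> (ham a b < ham a c)%N) ->
  is_bnn_rep f (map (@embed R n) P) (map (@embed R n) N).
Proof.
move=> uP uN P0 N0 dPN h; split.
  split.
  - by rewrite !(map_inj_uniq (@embed_inj R n)) uP uN.
  - by case: P P0 {dPN h uP}.
  - by case: N N0 {dPN h uN}.
  - move=> x /mapP [a aP ->]; rewrite mem_map; [exact: dPN | exact: embed_inj].
  - move=> a; have := h a; case: (f a) => -[b bP hb]; exists (embed R b); rewrite ?map_f //;
      move=> x /mapP [c cP ->]; rewrite dist_embed_lt; exact: hb.
move=> x; rewrite -map_cat => /mapP [a _ ->]; by exists a.
Qed.

Lemma ham_zero n (a : cube n) : ham a [ffun=> false] = wt a.
Proof. apply: eq_bigr => i _; rewrite ffunE; by case: (a i). Qed.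

Lemma ham_one n (a : cube n) : (ham a [ffun=> true] + wt a)%N = n.
Proof.
rewrite /ham /wt -big_split /=.
transitivity (\sum_(i < n) 1)%N; last by rewrite sum1_card card_ord.
apply: eq_bigr => i _; rewrite ffunE; by case: (a i).
Qed.

Definition xf n (j : 'I_n) : cube n := [ffun i => i != j].

Lemma ham_xf n (a : cube n) j : (ham a (xf j) + wt a)%N = (n.-1 + 2 * a j)%N.
Proof.
rewrite /ham /wt (bigD1 j) //= [X in (_ + X)%N](bigD1 j) //= ffunE eqxx.
have e : (\sum_(i < n | i != j) (a i != xf j i) + \sum_(i < n | i != j) a i = n.-1)%N.
  rewrite -big_split /=.
  transitivity (\sum_(i < n | i != j) 1)%N.
    by apply: eq_bigr => i hi; rewrite ffunE hi; case: (a i).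
  rewrite sum1dep_card (eq_card (B := predC1 j)); last by move=> x; rewrite inE.
  by rewrite cardC1 card_ord.
by move: e; case: (a j) => /= <-; ring.
Qed.
Lemma partb_odd (R : realType) n : odd n -> BNN_eq R (@MAJ n) 2.
Proof.
move=> on; split; last by move=> P N [h _]; exact: nn_size_ge2 h.
have n0 : (0 < n)%N by case: n on.
have hn := odd_double_half n; rewrite on -muln2 in hn.
exists (map (@embed R n) [:: [ffun=> true]]), (map (@embed R n) [:: [ffun=> false]]); split; last by [].
apply: bnn_of_ham => //.
- move=> x; rewrite !inE => /eqP ->; apply/eqP => /ffunP /(_ (Ordinal n0)); rewrite !ffunE.
  by [].
- move=> a; rewrite /MAJ -/(wt a); case: ifP => hM.
  + exists [ffun=> true]; first by rewrite inE.
    move=> c; rewrite inE => /eqP ->; rewrite ham_zero; have := ham_one a; lia.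
  + exists [ffun=> false]; first by rewrite inE.
    move=> c; rewrite inE => /eqP ->; rewrite ham_zero; have := ham_one a; lia.
Qed.

Lemma partb_even (R : realType) n : (0 < n)%N -> ~~ odd n -> BNN_le R (@MAJ n) (n./2 + 2).
Proof.
move=> n0 ev.
have hn := odd_double_half n; rewrite (negbTE ev) -muln2 add0n in hn.
set m := n./2 in hn *.
have hle : (m.+1 <= n)%N by lia.
pose Pl := [seq xf (widen_ord hle j) | j <- enum 'I_m.+1].
pose Nl := [:: ([ffun=> false] : cube n)].
exists (map (@embed R n) Pl), (map (@embed R n) Nl); split; last first.
  by rewrite /rep_size !size_map -enumT size_enum_ord /=; lia.
apply: bnn_of_ham.
- rewrite map_inj_uniq ?enum_uniq // => j1 j2 /ffunP /(_ (widen_ord hle j1)).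
  rewrite !ffunE eqxx => /esym/negbFE/eqP /(congr1 val) /= h.
  exact: val_inj h.
- by [].
- by rewrite -size_eq0 size_map size_enum_ord.
- by [].
- move=> x /mapP [j _ ->]; rewrite inE; apply/eqP => /ffunP.
  set w := widen_ord hle j.
  have hi : (((w : nat) == 0%N) < n)%N by case: ((w : nat) == 0%N); lia.
  move/(_ (Ordinal hi)); rewrite !ffunE -val_eqE /=.
  by case: (nat_of_ord j) => [|k] /=.
- move=> a; rewrite /MAJ -/(wt a); case: ifP => hM.
  + case: (boolP [exists j : 'I_n, (j < m.+1)%N && ~~ a j]) => [/existsP [j /andP [jm naj]] | /existsPn hall].
    * exists (xf j).
        apply/mapP; exists (Ordinal jm); first exact: mem_enum.
        by congr xf; apply: val_inj.
      move=> c; rewrite inE => /eqP ->; rewrite ham_zero.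
      have := ham_xf a j; rewrite (negbTE naj) /=; lia.
    * pose j0 := widen_ord hle ord0.
      have aj0 : a j0.
        by have := hall j0; case: (a j0) => //; rewrite andbT /j0 /=.
      have wm : (m.+1 <= wt a)%N.
        have : (\sum_(i < n | (i < m.+1)%N) 1 <= wt a)%N.
          rewrite /wt big_mkcond; apply: leq_sum => i _; case: ifP => // hi.
          by have := hall i; rewrite hi /=; case: (a i).
        by rewrite -(@big_ord_widen nat 0%N addn m.+1 n (fun _ => 1%N) hle) sum1_card card_ord.
      exists (xf j0); first by apply/mapP; exists ord0; first exact: mem_enum.
      move=> c; rewrite inE => /eqP ->; rewrite ham_zero.
      have := ham_xf a j0; rewrite aj0 /=; lia.
  + exists [ffun=> false]; first by rewrite inE.
    move=> c /mapP [j _ ->]; rewrite ham_zero.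
    have := ham_xf a (widen_ord hle j); lia.
Qed.

Unset Implicit Arguments.

Theorem theorem2 (R : realType) :
  (* (a) *)
  (forall (n : nat) (f : boolfun n), (0 < n)%N -> is_threshold R f -> NN_eq R f 2)
  /\
  (* (b) *)
  ((forall n : nat, odd n -> BNN_eq R (@MAJ n) 2) /\
   (forall n : nat, (0 < n)%N -> ~~ odd n -> BNN_le R (@MAJ n) (n./2 + 2)))
  /\
  (* (c) BNN(TH_n^{floor(n/3)}) = 2^{Omega(n)} *)
  (exists c : R, 0 < c /\
     exists n0 : nat, forall n : nat, (n0 <= n)%N ->
       forall P N : seq (point R n), is_bnn_rep (@TH n (n %/ 3)) P N ->
         (2 : R) `^ (c * n%:R) <= (rep_size P N)%:R).
Proof.
split; first by move=> n f n0 ht; exact: parta n0 ht.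
split; last exact: partc.
split; [exact: partb_odd | exact: partb_even].
Qed.
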